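(* Let $\mathcal{X}$ be a finite set, let $p_1,\ldots,p_t$ and $q_1,\ldots,q_l$ be probability distributions on $\mathcal{X}$, and let $0\le \epsilon_{ij}\le 1$ for $i\in[t]$, $j\in[l]$. Then there is a function $f:\mathcal{X}\to[0,1]$ such that (1) for all $i\in[t]$, $\sum_x p_i(x) f(x)\ \ge\ 1-\sum_{j=1}^l \epsilon_{ij}$; (2) for all $j\in[l]$, $\sum_x q_j(x) f(x)\ \le\ \sum_{i=1}^t 2^{-D^{\epsilon_{ij}}_H(p_i\|q_j)}$.
   Context: For probability distributions $p,q$ on a finite set $\Omega$ and $0\le\epsilon\le 1$, the classical hypothesis testing relative entropy is $D^\epsilon_H(p\|q):=\max_{f}\,-\log_2\sum_\omega f(\omega)q(\omega)$, where the maximum is over all functions $f:\Omega\to[0,1]$ with $\sum_\omega f(\omega)p(\omega)\ge 1-\epsilon$. *)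

(* Defs.v *)
From Stdlib Require Import Reals Lra ClassicalEpsilon.
Open Scope R_scope.

(* The finite set X is modelled as {0, ..., n-1}; functions on X are
   functions nat -> R of which only the values at x < n matter. *)

Fixpoint sumR (n : nat) (g : nat -> R) : R :=
  match n with
  | O => 0
  | S k => sumR k g + g k
  end.

Definition is_distr (n : nat) (p : nat -> R) : Prop :=
  (forall x, (x < n)%nat -> 0 <= p x) /\ sumR n p = 1.

Definition is_test (n : nat) (f : nat -> R) : Prop :=
  forall x, (x < n)%nat -> 0 <= f x <= 1.

Definition expect (n : nat) (p f : nat -> R) : R :=
  sumR n (fun x => f x * p x).

(* greatest lower bound of a set of reals (0 if it does not exist) *)
Definition Rglb (E : R -> Prop) : R :=
  - epsilon (inhabits 0) (fun m => is_lub (fun y => E (- y)) m).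

(* By definition D^eps_H(p||q) = - log2 (beta_H eps p q), i.e.
   2^{- D^eps_H(p||q)} = beta_H eps p q  (with D_H = +infinity and
   2^{-D_H} = 0 when the minimum is 0).  For distributions p,q and
   0 <= eps <= 1 the feasible set is nonempty (f = 1) and compact, so
   the infimum below is the attained minimum. *)
Definition beta_H (n : nat) (eps : R) (p q : nat -> R) : R :=
  Rglb (fun y => exists f, is_test n f /\ expect n p f >= 1 - eps
                           /\ y = expect n q f).

Definition pow2_neg_DH (n : nat) (eps : R) (p q : nat -> R) : R :=
  beta_H n eps p q.

(* Main.v *)
Require Import Defs.
From Stdlib Require Import Reals.
Open Scope R_scope.

Module M.
From HB Require Import structures.
From mathcomp Require Import all_boot all_order all_algebra.
From mathcomp Require Import all_classical all_reals all_analysis.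
From mathcomp Require Import Rstruct Rstruct_topology.
Import Order.TTheory GRing.Theory Num.Theory.
Import numFieldNormedType.Exports.
Local Open Scope classical_set_scope.
Local Open Scope ring_scope.

Lemma attain_mx (R : realType) n (c : R) (p q : 'I_n -> R) (g0 : 'rV[R]_n) :
  (forall i, 0 <= g0 ord0 i <= 1) -> c <= \sum_i g0 ord0 i * p i ->
  exists2 v : 'rV[R]_n, ((forall i, 0 <= v ord0 i <= 1) /\ c <= \sum_i v ord0 i * p i) &
   forall w : 'rV[R]_n, (forall i, 0 <= w ord0 i <= 1) -> c <= \sum_i w ord0 i * p i ->
     \sum_i v ord0 i * q i <= \sum_i w ord0 i * q i.
Proof.
move=> g0b g0c.
pose B := [set v : 'rV[R]_n | forall i, `[0, 1]%classic (v ord0 i)].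
pose S := [set v : 'rV[R]_n | c <= \sum_i v ord0 i * p i].
have cont : forall r : 'I_n -> R, continuous (fun v : 'rV[R]_n => \sum_i v ord0 i * r i).
  move=> r; apply: continuous_big; first exact: add_continuous.
  move=> i _ v; apply: (@continuousM _ _ (fun v : 'rV[R]_n => v ord0 i) (fun=> r i)); [exact: coord_continuous | exact: cst_continuous].
have cB : compact B by exact: (@rV_compact R n (fun=> `[0, 1]%classic) (fun=> @segment_compact R 0 1)).
have clS : closed S.
  have := (proj1 (continuous_closedP _) (cont p)) _ (@closed_ge R c).
  by [].
have cBS : compact (B `&` S) by exact: compact_closedI.
have ne : (B `&` S) !=set0.
  exists g0; split => //= i; rewrite /= in_itv /=; exact: g0b.
have [v vin vmin] := compact_EVT_min ne cBS (continuous_subspaceT (cont q)).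
move: vin; rewrite inE => -[vB vS].
exists v.
  split => // i; have := vB i; by rewrite /= in_itv.
move=> w wb wc; apply: vmin; rewrite inE; split => //= i.
Qed.

Lemma sumR_big n (g : nat -> R) : sumR n g = \sum_(i < n) g i.
Proof.
elim: n => [|n IH]; first by rewrite big_ord0.
by rewrite big_ord_recr /= IH.
Qed.

Lemma attain n (c : R) (p q : nat -> R) (g0 : nat -> R) :
  is_test n g0 -> Rge (expect n p g0) c ->
  exists f, is_test n f /\ Rge (expect n p f) c /\
    forall g, is_test n g -> Rge (expect n p g) c ->
      Rle (expect n q f) (expect n q g).
Proof.
move=> hg0 hc.
have tst : forall g : nat -> R, is_test n g -> forall i : 'I_n, 0 <= g i <= 1.
  move=> g hg i; have [h1 h2] := hg i (ssrnat.ltP (ltn_ord i)).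
  by apply/andP; split; apply/RleP.
have ex : forall g, expect n p g = \sum_(i < n) g i * p i.
  by move=> g; rewrite /expect sumR_big.
have exq : forall g, expect n q g = \sum_(i < n) g i * q i.
  by move=> g; rewrite /expect sumR_big.
have [v [vb vc] vmin] := @attain_mx R n c (fun i => p i) (fun i => q i) (\row_(i < n) g0 i)
   ltac:(by move=> i; rewrite mxE; apply: tst)
   ltac:(by under eq_bigr do rewrite mxE; rewrite -ex; apply/RleP; apply: Rge_le).
pose f x := odflt 0 (omap (fun i => v ord0 i) (insub x : option 'I_n)).
have fE : forall i : 'I_n, f i = v ord0 i by move=> i; rewrite /f valK.
have efp : expect n p f = \sum_(i < n) v ord0 i * p i.
  by rewrite ex; apply: eq_bigr => i _; rewrite fE.
have efq : expect n q f = \sum_(i < n) v ord0 i * q i.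
  by rewrite exq; apply: eq_bigr => i _; rewrite fE.
exists f; split; [|split].
- move=> x /ssrnat.ltP hx; have := vb (Ordinal hx); rewrite -fE /= => /andP[h1 h2].
  by split; apply/RleP.
- by rewrite efp; apply: Rle_ge; apply/RleP.
- move=> g hg hgc; rewrite efq exq.
  have e1 : forall r : 'I_n -> R, \sum_(i < n) (\row_(i < n) g i) ord0 i * r i = \sum_(i < n) g i * r i.
    by move=> r; apply: eq_bigr => i _; rewrite mxE.
  have := vmin (\row_(i < n) g i); rewrite !e1 => H; apply/RleP; apply: H.
  + by move=> i; rewrite mxE; apply: tst.
  + by rewrite -ex; apply/RleP; apply: Rge_le.
Qed.
End M.


From Stdlib Require Import Lra Lia ClassicalEpsilon.

Lemma sumR_ext n f g : (forall x, (x < n)%nat -> f x = g x) -> sumR n f = sumR n g.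
Proof. induction n; intros H; simpl; [reflexivity|]. rewrite IHn by (intros; apply H; lia). rewrite H by lia. reflexivity. Qed.

Lemma sumR_le n f g : (forall x, (x < n)%nat -> f x <= g x) -> sumR n f <= sumR n g.
Proof. induction n; intros H; simpl; [lra|]. assert (sumR n f <= sumR n g) by (apply IHn; intros; apply H; lia). assert (f n <= g n) by (apply H; lia). lra. Qed.

Lemma sumR_plus n f g : sumR n (fun x => f x + g x) = sumR n f + sumR n g.
Proof. induction n; simpl; [lra|]. rewrite IHn. lra. Qed.

Lemma sumR_minus n f g : sumR n (fun x => f x - g x) = sumR n f - sumR n g.
Proof. induction n; simpl; [lra|]. rewrite IHn. lra. Qed.

Lemma sumR_scal_r n f c : sumR n (fun x => f x * c) = sumR n f * c.
Proof. induction n; simpl; [lra|]. rewrite IHn. lra. Qed.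

Lemma sumR_swap n l (h : nat -> nat -> R) :
  sumR n (fun x => sumR l (fun j => h x j)) = sumR l (fun j => sumR n (fun x => h x j)).
Proof.
induction n; simpl.
- induction l; simpl; [lra|]. rewrite <- IHl. lra.
- rewrite IHn. rewrite <- sumR_plus. reflexivity.
Qed.

Lemma sumR_nonneg n f : (forall x, (x < n)%nat -> 0 <= f x) -> 0 <= sumR n f.
Proof. induction n; intros H; simpl; [lra|]. assert (0 <= sumR n f) by (apply IHn; intros; apply H; lia). assert (0 <= f n) by (apply H; lia). lra. Qed.

Fixpoint minl (l : nat) (g : nat -> R) : R :=
  match l with O => 1 | S k => Rmin (minl k g) (g k) end.
Fixpoint maxl (l : nat) (g : nat -> R) : R :=
  match l with O => 0 | S k => Rmax (maxl k g) (g k) end.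

Lemma minl_bounds l g : (forall k, (k < l)%nat -> 0 <= g k <= 1) -> 0 <= minl l g <= 1.
Proof.
induction l; intros H; simpl; [lra|].
assert (0 <= minl l g <= 1) by (apply IHl; intros; apply H; lia).
assert (0 <= g l <= 1) by (apply H; lia).
split. apply Rmin_glb; lra. apply Rle_trans with (minl l g); [apply Rmin_l|lra].
Qed.

Lemma minl_ge l g : (forall k, (k < l)%nat -> 0 <= g k <= 1) ->
  1 - sumR l (fun k => 1 - g k) <= minl l g.
Proof.
induction l; intros H; simpl; [lra|].
assert (1 - sumR l (fun k => 1 - g k) <= minl l g) by (apply IHl; intros; apply H; lia).
assert (0 <= g l <= 1) by (apply H; lia).
assert (0 <= sumR l (fun k => 1 - g k)) by (apply sumR_nonneg; intros; assert (0 <= g x <= 1) by (apply H; lia); lra).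
apply Rmin_glb; lra.
Qed.

Lemma minl_le l g k : (k < l)%nat -> minl l g <= g k.
Proof.
induction l; intros H; simpl; [lia|].
destruct (Nat.eq_dec k l) as [->|Hne]; [apply Rmin_r|].
apply Rle_trans with (minl l g); [apply Rmin_l|apply IHl; lia].
Qed.

Lemma maxl_bounds l g : (forall k, (k < l)%nat -> 0 <= g k <= 1) -> 0 <= maxl l g <= 1.
Proof.
induction l; intros H; simpl; [lra|].
assert (0 <= maxl l g <= 1) by (apply IHl; intros; apply H; lia).
assert (0 <= g l <= 1) by (apply H; lia).
split. apply Rle_trans with (maxl l g); [lra|apply Rmax_l]. apply Rmax_lub; lra.
Qed.

Lemma maxl_le_sum l g : (forall k, (k < l)%nat -> 0 <= g k) -> maxl l g <= sumR l g.
Proof.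
induction l; intros H; simpl; [lra|].
assert (maxl l g <= sumR l g) by (apply IHl; intros; apply H; lia).
assert (0 <= g l) by (apply H; lia).
assert (0 <= sumR l g) by (apply sumR_nonneg; intros; apply H; lia).
apply Rmax_lub; lra.
Qed.

Lemma maxl_ge l g k : (k < l)%nat -> g k <= maxl l g.
Proof.
induction l; intros H; simpl; [lia|].
destruct (Nat.eq_dec k l) as [->|Hne]; [apply Rmax_r|].
apply Rle_trans with (maxl l g); [apply IHl; lia|apply Rmax_l].
Qed.

Lemma Rglb_min (E : R -> Prop) m : E m -> (forall y, E y -> m <= y) -> Rglb E = m.
Proof.
intros Em Hm.
assert (Hl : is_lub (fun y => E (- y)) (- m)).
{ split.
  - intros y Ey. specialize (Hm _ Ey). lra.
  - intros b Hb. apply Hb. replace (- - m) with m by ring. exact Em. }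
unfold Rglb.
assert (He : exists x, is_lub (fun y => E (- y)) x) by (exists (-m); exact Hl).
pose proof (epsilon_spec (inhabits 0) _ He) as Hs.
set (e := epsilon (inhabits 0) (fun m0 => is_lub (fun y => E (- y)) m0)) in *.
assert (e = - m) by (apply (is_lub_u _ _ _ Hs Hl)).
lra.
Qed.

Theorem fact1 (n t l : nat) (p q : nat -> nat -> R) (eps : nat -> nat -> R)
  (hp : forall i, (i < t)%nat -> is_distr n (p i))
  (hq : forall j, (j < l)%nat -> is_distr n (q j))
  (heps : forall i j, (i < t)%nat -> (j < l)%nat -> 0 <= eps i j <= 1) :
  exists f : nat -> R, is_test n f /\
    (forall i, (i < t)%nat ->
       expect n (p i) f >= 1 - sumR l (fun j => eps i j)) /\
    (forall j, (j < l)%nat ->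
       expect n (q j) f <= sumR t (fun i => pow2_neg_DH n (eps i j) (p i) (q j))).
Proof.
assert (E : forall i j, exists f, ((i < t)%nat -> (j < l)%nat -> is_test n f /\
   expect n (p i) f >= 1 - eps i j /\ expect n (q j) f <= pow2_neg_DH n (eps i j) (p i) (q j))).
{ intros i j.
  destruct (Compare_dec.lt_dec i t) as [hi|hi]; [|exists (fun _ => 0); intros; contradiction].
  destruct (Compare_dec.lt_dec j l) as [hj|hj]; [|exists (fun _ => 0); intros; contradiction].
  destruct (hp i hi) as [hp0 hp1]. pose proof (heps i j hi hj).
  destruct (M.attain n (1 - eps i j) (p i) (q j) (fun _ => 1)) as [f [hf [hfc hfm]]].
  - intros x _; lra.
  - unfold expect. rewrite (sumR_ext n _ (p i)) by (intros; ring). lra.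
  - exists f; intros _ _. split; [exact hf|split; [exact hfc|]].
    unfold pow2_neg_DH, beta_H. rewrite (Rglb_min _ (expect n (q j) f)); [lra| |].
    + exists f. auto.
    + intros y [g [hg [hgc ->]]]. apply hfm; auto. }
set (F := fun i j => proj1_sig (constructive_indefinite_description _ (E i j))).
assert (HF : forall i j, (i < t)%nat -> (j < l)%nat -> is_test n (F i j) /\
   expect n (p i) (F i j) >= 1 - eps i j /\ expect n (q j) (F i j) <= pow2_neg_DH n (eps i j) (p i) (q j)).
{ intros i j hi hj. unfold F. destruct (constructive_indefinite_description _ (E i j)) as [f Hf]. simpl. auto. }
assert (Fb : forall i j x, (i < t)%nat -> (j < l)%nat -> (x < n)%nat -> 0 <= F i j x <= 1).
{ intros i j x hi hj hx. destruct (HF i j hi hj) as [h _]. apply h; auto. }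
set (m := fun i x => minl l (fun j => F i j x)).
assert (mb : forall i x, (i < t)%nat -> (x < n)%nat -> 0 <= m i x <= 1).
{ intros i x hi hx. apply minl_bounds. intros; apply Fb; auto. }
exists (fun x => maxl t (fun i => m i x)).
split; [|split].
- intros x hx. apply maxl_bounds. intros; apply mb; auto.
- intros i hi. destruct (hp i hi) as [hp0 hp1].
  apply Rle_ge.
  apply Rle_trans with (expect n (p i) (fun x => 1 - sumR l (fun j => 1 - F i j x))).
  + unfold expect.
    rewrite (sumR_ext n _ (fun x => p i x - sumR l (fun j => p i x - F i j x * p i x))).
    2:{ intros x hx.
        rewrite (sumR_ext l (fun j => p i x - F i j x * p i x) (fun j => (1 - F i j x) * p i x)) by (intros; ring).
        rewrite sumR_scal_r. ring. }
    rewrite sumR_minus. rewrite sumR_swap. rewrite hp1.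
    rewrite (sumR_ext l (fun j => sumR n (fun x => p i x - F i j x * p i x)) (fun j => 1 - expect n (p i) (F i j))).
    2:{ intros j hj. cbv beta. rewrite (sumR_minus n (p i) (fun x => F i j x * p i x)). rewrite hp1. reflexivity. }
    assert (sumR l (fun j => 1 - expect n (p i) (F i j)) <= sumR l (fun j => eps i j)).
    { apply sumR_le. intros j hj. destruct (HF i j hi hj) as [_ [h _]]. lra. }
    lra.
  + unfold expect. apply sumR_le. intros x hx. apply Rmult_le_compat_r; [apply hp0; auto|].
    apply Rle_trans with (m i x); [apply minl_ge; intros; apply Fb; auto|].
    apply (maxl_ge t (fun i => m i x)); auto.
- intros j hj. destruct (hq j hj) as [hq0 hq1].
  apply Rle_trans with (expect n (q j) (fun x => sumR t (fun i => F i j x))).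
  + unfold expect. apply sumR_le. intros x hx. apply Rmult_le_compat_r; [apply hq0; auto|].
    apply Rle_trans with (sumR t (fun i => m i x)).
    * apply maxl_le_sum. intros; apply mb; auto.
    * apply sumR_le. intros i hi. apply (minl_le l (fun j0 => F i j0 x) j); auto.
  + unfold expect.
    rewrite (sumR_ext n _ (fun x => sumR t (fun i => F i j x * q j x))) by (intros; rewrite sumR_scal_r; reflexivity).
    rewrite sumR_swap. apply sumR_le. intros i hi. destruct (HF i j hi hj) as [_ [_ h]]. exact h.
Qed.
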